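(* Let $(G_n)_{n\in\mathbb N}$ be an increasing sequence of subgroups of $\mathrm{Diff}^1_+([0,1])$ (i.e. $G_n\subset G_{n+1}$ for all $n$). Assume that every $G_n$ is finitely generated and $C^1$-close to the identity. Then $G=\bigcup_{n\in\mathbb N}G_n$ is $C^1$-close to the identity.
   Context: A group $G\subset \mathrm{Diff}^1_+([0,1])$ is $C^1$-close to the identity if there is a sequence $h_n\in \mathrm{Diff}^1_+([0,1])$ such that $h_n g h_n^{-1}\to \mathrm{id}$ in the $C^1$-topology as $n\to\infty$, for every $g\in G$. *)

(* Defs.v *)
From Stdlib Require Import Reals List.
Open Scope R_scope.

Definition I01 (x : R) : Prop := 0 <= x <= 1.

(* df0 is the derivative of f at x relative to [0,1]
   (one-sided at the endpoints). *)
Definition is_deriv01 (f : R -> R) (x df0 : R) : Prop :=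
  limit1_in (fun y => (f y - f x) / (y - x)) (fun y => I01 y /\ y <> x) df0 x.

Definition C1_deriv01 (f df : R -> R) : Prop :=
  (forall x, I01 x -> is_deriv01 f x (df x)) /\
  (forall x, I01 x -> limit1_in df I01 (df x) x).

Definition C1_01 (f : R -> R) : Prop := exists df, C1_deriv01 f df.

(* Diff^1_+([0,1]): f maps [0,1] to [0,1], is C^1, increasing, and has an
   inverse on [0,1] which is also C^1. Elements are identified when they
   agree on [0,1]. *)
Definition Diff1p (f : R -> R) : Prop :=
  (forall x, I01 x -> I01 (f x)) /\ C1_01 f /\
  (forall x y, I01 x -> I01 y -> x < y -> f x < f y) /\
  exists g, (forall x, I01 x -> I01 (g x)) /\ C1_01 g /\
            (forall x, I01 x -> g (f x) = x /\ f (g x) = x).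

Definition is_subgroup (G : (R -> R) -> Prop) : Prop :=
  (forall f, G f -> Diff1p f) /\
  G (fun x => x) /\
  (forall f g, G f -> G g -> G (fun x => f (g x))) /\
  (forall f, G f -> exists g, G g /\
      forall x, I01 x -> g (f x) = x /\ f (g x) = x).

Inductive gen (S : list (R -> R)) : (R -> R) -> Prop :=
| gen_base : forall f, In f S -> gen S f
| gen_id : gen S (fun x => x)
| gen_comp : forall f g, gen S f -> gen S g -> gen S (fun x => f (g x))
| gen_inv : forall f g, gen S f -> (forall x, I01 x -> I01 (g x)) ->
    (forall x, I01 x -> g (f x) = x /\ f (g x) = x) -> gen S g
| gen_ext : forall f g, gen S f -> (forall x, I01 x -> f x = g x) -> gen S g.

Definition fin_gen (G : (R -> R) -> Prop) : Prop :=
  exists S : list (R -> R), (forall s, In s S -> G s) /\ (forall g, G g -> gen S g).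

Definition C1_conv_id (u : nat -> R -> R) : Prop :=
  exists du : nat -> R -> R,
    (forall n, C1_deriv01 (u n) (du n)) /\
    forall eps, eps > 0 -> exists N, forall n, (n >= N)%nat ->
      forall x, I01 x -> Rabs (u n x - x) < eps /\ Rabs (du n x - 1) < eps.

Definition C1_close_id (G : (R -> R) -> Prop) : Prop :=
  exists h hinv : nat -> R -> R,
    (forall n, Diff1p (h n)) /\
    (forall n x, I01 x -> I01 (hinv n x) /\ hinv n (h n x) = x /\ h n (hinv n x) = x) /\
    forall g, G g -> C1_conv_id (fun n x => h n (g (hinv n x))).

(* Main.v *)
Require Import Defs.
From Stdlib Require Import Reals List Lra Lia ClassicalEpsilon.
Open Scope R_scope.

Lemma lim_dom f D D' l x : limit1_in f D l x -> (forall y, D' y -> D y) -> limit1_in f D' l x.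
Proof.
  intros H HD eps He. destruct (H eps He) as [a [Ha Hb]]. exists a; split; auto.
  intros y [Hy1 Hy2]. apply Hb; auto.
Qed.

Lemma lim_ext f g D l x : limit1_in f D l x -> (forall y, D y -> f y = g y) -> limit1_in g D l x.
Proof.
  intros H HD eps He. destruct (H eps He) as [a [Ha Hb]]. exists a; split; auto.
  intros y [Hy1 Hy2]. rewrite <- HD by auto. apply Hb; auto.
Qed.

Lemma lim_id D x : limit1_in (fun y => y) D x x.
Proof. intros eps He. exists eps; split; auto. intros y [_ H]; exact H. Qed.

Lemma deriv_cont f x d : is_deriv01 f x d -> limit1_in f I01 (f x) x.
Proof.
  intros H.
  assert (H1 : limit1_in (fun y => (f y - f x) / (y - x) * (y - x)) (fun y => I01 y /\ y <> x) (d * 0) x).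
  { apply limit_mul; [exact H|]. replace 0 with (x - x) by ring. apply limit_minus. apply lim_id.
    apply (limit_free (fun _ => x) _ x). }
  rewrite Rmult_0_r in H1.
  intros eps He. destruct (H1 eps He) as [a [Ha Hb]]. exists a; split; auto.
  intros y [Hy1 Hy2]. destruct (Req_dec y x) as [->|Hne].
  - simpl. unfold Rdist. replace (f x - f x) with 0 by ring. rewrite Rabs_R0; auto.
  - specialize (Hb y (conj (conj Hy1 Hne) Hy2)). simpl in *. unfold Rdist in *.
    replace (f y - f x) with ((f y - f x) / (y - x) * (y - x) - 0). exact Hb.
    field. intro; apply Hne; lra.
Qed.

Lemma deriv_ext f g x d : is_deriv01 f x d -> I01 x -> (forall y, I01 y -> f y = g y) -> is_deriv01 g x d.
Proof.
  intros H Hx E. unfold is_deriv01. eapply lim_ext; [exact H|].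
  intros y [Hy _]. simpl. rewrite !E; auto.
Qed.

Lemma adh01 x : I01 x -> adhDa (fun y => I01 y /\ y <> x) x.
Proof.
  intros Hx alp Ha. unfold I01 in *. set (m := Rmin alp 1).
  assert (0 < m) by (unfold m; apply Rmin_pos; lra).
  assert (m <= alp) by apply Rmin_l. assert (m <= 1) by apply Rmin_r.
  destruct (Rle_dec x (1/2)).
  - exists (x + m/2). split; [split; [lra|intro; lra]|].
    unfold Rdist. replace (x + m/2 - x) with (m/2) by ring. rewrite Rabs_right; lra.
  - exists (x - m/2). split; [split; [lra|intro; lra]|].
    unfold Rdist. replace (x - m/2 - x) with (-(m/2)) by ring. rewrite Rabs_Ropp, Rabs_right; lra.
Qed.

Lemma deriv_uniq f x a b : I01 x -> is_deriv01 f x a -> is_deriv01 f x b -> a = b.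
Proof. intros Hx Ha Hb. eapply single_limit; [apply adh01; exact Hx| exact Ha | exact Hb]. Qed.

Lemma chain f g x a b : I01 x -> (forall y, I01 y -> I01 (f y)) ->
  is_deriv01 f x a -> is_deriv01 g (f x) b -> is_deriv01 (fun y => g (f y)) x (b * a).
Proof.
  intros Hx Hf Ha Hb.
  set (phi := fun z => if Req_EM_T z (f x) then b else (g z - g (f x)) / (z - f x)).
  assert (Hphi : limit1_in phi I01 b (f x)).
  { intros eps He. destruct (Hb eps He) as [al [Hal Hal2]]. exists al; split; auto.
    intros z [Hz Hd]. unfold phi. destruct (Req_EM_T z (f x)) as [E|E].
    - simpl; unfold Rdist. replace (b - b) with 0 by ring. rewrite Rabs_R0; auto.
    - apply Hal2. auto. }
  assert (Hc : limit1_in f (fun y => I01 y /\ y <> x) (f x) x).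
  { eapply lim_dom. apply (deriv_cont _ _ _ Ha). intros y [Hy _]; exact Hy. }
  assert (H2 := limit_comp _ _ _ _ _ _ _ Hc Hphi).
  assert (H3 : limit1_in (fun y => phi (f y)) (fun y => I01 y /\ y <> x) b x).
  { eapply lim_dom; [exact H2|]. intros y [Hy Hn]. split; [split; auto| apply Hf; auto]. }
  assert (H4 := limit_mul _ _ _ _ _ _ H3 Ha).
  unfold is_deriv01. eapply lim_ext; [exact H4|]. intros y [Hy Hn]. simpl. unfold phi.
  destruct (Req_EM_T (f y) (f x)) as [E|E].
  - rewrite E. replace (f x - f x) with 0 by ring. unfold Rdiv. ring.
  - field. split; intro; [apply Hn|apply E]; lra.
Qed.

Lemma C1_comp f g df dg : (forall y, I01 y -> I01 (f y)) -> C1_deriv01 f df -> C1_deriv01 g dg ->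
  C1_deriv01 (fun y => g (f y)) (fun y => dg (f y) * df y).
Proof.
  intros Hf [Hf1 Hf2] [Hg1 Hg2]. split.
  - intros x Hx. apply chain; auto.
  - intros x Hx. apply limit_mul; auto.
    assert (H := limit_comp _ _ _ _ _ _ _ (deriv_cont _ _ _ (Hf1 x Hx)) (Hg2 (f x) (Hf x Hx))).
    eapply lim_dom; [exact H|]. intros y Hy. split; auto.
Qed.

Lemma C1_id : C1_deriv01 (fun y => y) (fun _ => 1).
Proof.
  split.
  - intros x Hx. eapply lim_ext. apply (limit_free (fun _ => 1) _ 0). intros y [_ Hn]. simpl. field. intro; apply Hn; lra.
  - intros x Hx. apply (limit_free (fun _ => 1) _ 0).
Qed.

Lemma C1_ext f g df : C1_deriv01 f df -> (forall y, I01 y -> f y = g y) -> C1_deriv01 g df.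
Proof. intros [H1 H2] E. split; auto. intros x Hx. eapply deriv_ext; eauto. Qed.

Definition Near (u : R -> R) e := forall du, C1_deriv01 u du -> forall x, I01 x ->
  Rabs (u x - x) < e /\ Rabs (du x - 1) < e.
Definition cj (h hi g : R -> R) := fun x => h (g (hi x)).
Definition maps01 (f : R -> R) := forall x, I01 x -> I01 (f x).
Definition invp (h hi : R -> R) := forall x, I01 x -> I01 (hi x) /\ hi (h x) = x /\ h (hi x) = x.

Lemma inv_C1 h hi : Diff1p h -> invp h hi -> C1_01 hi.
Proof.
  intros [Hm [Hc [Hinc [g0 [Hg0m [[dg Hg0c] Hg0i]]]]]] Hi.
  exists dg. eapply C1_ext; [exact Hg0c|]. intros y Hy.
  destruct (Hg0i y Hy) as [_ E]. destruct (Hi (g0 y) (Hg0m y Hy)) as [_ [E2 _]].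
  rewrite <- E at 2. rewrite E2. reflexivity.
Qed.

Lemma conj_C1 h hi g g' : Diff1p h -> invp h hi -> Diff1p g' -> (forall y, I01 y -> g y = g' y) ->
  C1_01 (cj h hi g) /\ maps01 (cj h hi g).
Proof.
  intros Dh Hi Dg E.
  destruct (inv_C1 _ _ Dh Hi) as [dhi Chi].
  destruct Dh as [Hm [[dh Ch] _]]. destruct Dg as [Gm [[dg Cg] _]].
  assert (Mhi : maps01 hi) by (intros x Hx; apply Hi; auto).
  split.
  - exists (fun y => dh (g' (hi y)) * (dg (hi y) * dhi y)).
    eapply C1_ext; [apply (C1_comp (fun y => g' (hi y)) h); [intros y Hy; auto | apply C1_comp; auto | exact Ch]|].
    intros y Hy. unfold cj. rewrite E; auto.
  - intros x Hx. unfold cj. rewrite E; auto.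
Qed.

Lemma near_ext u w e : Near u e -> (forall y, I01 y -> u y = w y) -> Near w e.
Proof.
  intros H E du Cd x Hx. rewrite <- E by auto. apply H; auto.
  eapply C1_ext; [exact Cd|]. intros; symmetry; auto.
Qed.

Lemma near_id w e : e > 0 -> (forall y, I01 y -> w y = y) -> Near w e.
Proof.
  intros He E du Cd x Hx. rewrite E by auto.
  assert (du x = 1).
  { eapply deriv_uniq. exact Hx. apply Cd; auto.
    eapply deriv_ext. apply C1_id; auto. auto. intros; symmetry; auto. }
  rewrite H. replace (x - x) with 0 by ring. replace (1 - 1) with 0 by ring.
  rewrite Rabs_R0. lra.
Qed.

Lemma near_comp u v w e : maps01 u -> maps01 v -> C1_01 u -> C1_01 v -> Near u e -> Near v e ->
  e <= 1 -> (forall y, I01 y -> w y = u (v y)) -> Near w (3 * e).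
Proof.
  intros Mu Mv [du Cu] [dv Cv] Nu Nv He E dw Cw x Hx.
  assert (Cuv := C1_comp _ _ _ _ Mv Cv Cu).
  assert (D : dw x = du (v x) * dv x).
  { eapply deriv_uniq. exact Hx. apply Cw; auto.
    eapply deriv_ext. apply Cuv; auto. auto. intros; symmetry; auto. }
  rewrite D, E by auto.
  destruct (Nu du Cu (v x) (Mv x Hx)) as [A1 A2].
  destruct (Nv dv Cv x Hx) as [B1 B2].
  split.
  - replace (u (v x) - x) with ((u (v x) - v x) + (v x - x)) by ring.
    eapply Rle_lt_trans. apply Rabs_triang.
    assert (0 <= e) by (pose proof (Rabs_pos (v x - x)); lra). lra.
  - replace (du (v x) * dv x - 1) with ((du (v x) - 1) * dv x + (dv x - 1)) by ring.
    eapply Rle_lt_trans. apply Rabs_triang. rewrite Rabs_mult.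
    assert (Rabs (dv x) <= 1 + e).
    { replace (dv x) with ((dv x - 1) + 1) by ring. eapply Rle_trans. apply Rabs_triang.
      rewrite Rabs_R1. lra. }
    assert (Rabs (du (v x) - 1) * Rabs (dv x) <= e * (1 + e)).
    { apply Rmult_le_compat; try apply Rabs_pos; lra. }
    assert (0 <= e) by (pose proof (Rabs_pos (v x - x)); lra). assert (e * (1 + e) <= 2 * e) by nra. lra.
Qed.

Lemma near_inv u w e : maps01 u -> maps01 w -> C1_01 u -> C1_01 w ->
  (forall x, I01 x -> w (u x) = x /\ u (w x) = x) -> Near u e -> e <= 1/2 -> Near w (2 * e).
Proof.
  intros Mu Mw [du Cu] _ Iv Nu He dw Cw y Hy.
  set (z := w y).
  assert (Hz : I01 z) by (apply Mw; auto).
  assert (uz : u z = y) by (apply Iv; auto).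
  assert (D : du z * dw y = 1).
  { eapply deriv_uniq. exact Hy. apply (C1_comp _ _ _ _ Mw Cw Cu); auto.
    eapply deriv_ext. apply C1_id; auto. auto. intros t Ht. symmetry. apply Iv; auto. }
  destruct (Nu du Cu z Hz) as [A1 A2].
  rewrite uz in A1.
  split.
  - fold z. rewrite <- Rabs_Ropp. replace (-(z - y)) with (y - z) by ring. pose proof (Rabs_pos (y - z)); lra.
  - assert (Ha : /2 <= Rabs (du z)).
    { replace (du z) with (1 - (1 - du z)) by ring.
      pose proof (Rabs_triang_inv 1 (1 - du z)). rewrite Rabs_R1 in H.
      rewrite <- Rabs_Ropp in A2. replace (-(du z - 1)) with (1 - du z) in A2 by ring. lra. }
    assert (dw y - 1 = (1 - du z) * dw y) by (rewrite Rmult_minus_distr_r; lra).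
    assert (Hdw : Rabs (dw y) * Rabs (du z) = 1).
    { rewrite <- Rabs_mult, Rmult_comm, D. apply Rabs_R1. }
    rewrite H, Rabs_mult.
    rewrite <- Rabs_Ropp in A2. replace (-(du z - 1)) with (1 - du z) in A2 by ring.
    assert (Rabs (dw y) <= 2) by nra.
    assert (0 <= Rabs (dw y)) by apply Rabs_pos.
    assert (0 <= Rabs (1 - du z)) by apply Rabs_pos.
    nra.
Qed.

Lemma fchoice {A B : Type} (P : A -> B -> Prop) : (forall a, exists b, P a b) -> exists f, forall a, P a (f a).
Proof.
  intros H. exists (fun a => proj1_sig (constructive_indefinite_description _ (H a))).
  intros a. exact (proj2_sig (constructive_indefinite_description _ (H a))).
Qed.

Lemma near_mono u e1 e2 : e1 <= e2 -> Near u e1 -> Near u e2.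
Proof. intros He H du C x Hx. destruct (H du C x Hx). split; lra. Qed.

Lemma conv_near u : C1_conv_id u -> forall eps, eps > 0 -> exists N, forall n, (n >= N)%nat -> Near (u n) eps.
Proof.
  intros [du0 [Cd Hc]] eps He. destruct (Hc eps He) as [N HN]. exists N.
  intros n Hn du C x Hx. destruct (HN n Hn x Hx) as [A1 A2]. split; auto.
  replace (du x) with (du0 n x); auto. eapply deriv_uniq. exact Hx. apply Cd; auto. apply C; auto.
Qed.

Lemma list_near (h hi : nat -> R -> R) (P : (R -> R) -> Prop) :
  (forall g, P g -> C1_conv_id (fun k => cj (h k) (hi k) g)) ->
  forall L, (forall g, In g L -> P g) -> forall e, e > 0 ->
  exists N, forall k, (k >= N)%nat -> forall g, In g L -> Near (cj (h k) (hi k) g) e.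
Proof.
  intros HP L. induction L as [|a L IH]; intros HL e He.
  - exists 0%nat. intros k _ g [].
  - destruct (IH (fun g Hg => HL g (or_intror Hg)) e He) as [N1 K1].
    destruct (conv_near _ (HP a (HL a (or_introl eq_refl))) e He) as [N2 K2].
    exists (Nat.max N1 N2). intros k Hk g [<-|Hg].
    + apply K2; lia.
    + apply K1; auto; lia.
Qed.

Definition Conv (H Hi : nat -> R -> R) g := forall eps, eps > 0 ->
  exists N, forall n, (n >= N)%nat -> Near (cj (H n) (Hi n) g) eps.

Lemma gen_ind (Gm : (R -> R) -> Prop) (S : list (R -> R)) (H Hi : nat -> R -> R) :
  is_subgroup Gm -> (forall s, In s S -> Gm s) ->
  (forall n, Diff1p (H n)) -> (forall n, invp (H n) (Hi n)) ->
  (forall s, In s S -> Conv H Hi s) ->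
  forall g, gen S g -> maps01 g /\ (exists g', Gm g' /\ forall y, I01 y -> g y = g' y) /\ Conv H Hi g.
Proof.
  intros [Gd [Gid [Gc Gi]]] HS HD HI Hb.
  assert (CC : forall n g, (exists g', Gm g' /\ forall y, I01 y -> g y = g' y) ->
     C1_01 (cj (H n) (Hi n) g) /\ maps01 (cj (H n) (Hi n) g)).
  { intros n g [g' [Hg' E]]. apply (conj_C1 _ _ _ g'); auto. }
  induction 1 as [f Hf | | f g Hf [Mf [Qf Cf]] Hg [Mg [Qg Cg]] | f g Hf [Mf [Qf Cf]] Mg Inv
                 | f g Hf [Mf [Qf Cf]] E].
  - split; [|split].
    + destruct (Gd f (HS f Hf)) as [M _]; exact M.
    + exists f; split; auto.
    + apply Hb; auto.
  - split; [|split].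
    + intros x Hx; exact Hx.
    + exists (fun x => x); split; auto.
    + intros eps He. exists 0%nat. intros n _. apply near_id; auto.
      intros y Hy. unfold cj. apply HI; auto.
  - split; [|split].
    + intros x Hx; auto.
    + destruct Qf as [f' [Hf' Ef]]. destruct Qg as [g' [Hg' Eg]].
      exists (fun x => f' (g' x)); split; auto. intros y Hy. rewrite Ef, Eg; auto.
    + intros eps He. set (e := Rmin (eps/3) 1).
      assert (He0 : 0 < e) by (unfold e; apply Rmin_pos; lra).
      assert (e <= eps/3) by apply Rmin_l. assert (e <= 1) by apply Rmin_r.
      destruct (Cf e He0) as [N1 K1]. destruct (Cg e He0) as [N2 K2].
      exists (Nat.max N1 N2). intros n Hn.
      destruct (CC n f Qf) as [C1f M1f]. destruct (CC n g Qg) as [C1g M1g].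
      eapply near_mono; [|eapply (near_comp (cj (H n) (Hi n) f) (cj (H n) (Hi n) g))]; eauto.
      lra. apply K1; lia. apply K2; lia.
      intros y Hy. unfold cj. f_equal. f_equal. symmetry. apply HI. apply Mg. apply HI; auto.
  - assert (Qg : exists g', Gm g' /\ forall y, I01 y -> g y = g' y).
    { destruct Qf as [f' [Hf' Ef]]. destruct (Gi f' Hf') as [f'' [Hf'' Ei]].
      exists f''; split; auto. intros y Hy.
      destruct (Inv y Hy) as [_ E1].
      rewrite <- E1 at 2. rewrite Ef by auto. destruct (Ei (g y) (Mg y Hy)) as [E2 _]. auto. }
    split; [|split]; auto.
    intros eps He. set (e := Rmin (eps/2) (1/2)).
    assert (He0 : 0 < e) by (unfold e; apply Rmin_pos; lra).
    assert (e <= eps/2) by apply Rmin_l. assert (e <= 1/2) by apply Rmin_r.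
    destruct (Cf e He0) as [N1 K1]. exists N1. intros n Hn.
    destruct (CC n f Qf) as [C1f M1f]. destruct (CC n g Qg) as [C1g M1g].
    eapply near_mono; [|eapply (near_inv (cj (H n) (Hi n) f) (cj (H n) (Hi n) g))]; eauto.
    lra.
    intros x Hx. unfold cj. assert (H4 : I01 (Hi n x)) by (apply HI; auto).
    split.
    + destruct (HI n (f (Hi n x)) (Mf _ H4)) as [_ [-> _]].
      destruct (Inv _ H4) as [-> _]. apply HI; auto.
    + destruct (HI n (g (Hi n x)) (Mg _ H4)) as [_ [-> _]].
      destruct (Inv _ H4) as [_ ->]. apply HI; auto.
  - split; [|split].
    + intros x Hx. rewrite <- E; auto.
    + destruct Qf as [f' [Hf' Ef]]. exists f'; split; auto. intros y Hy. rewrite <- E; auto.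
    + intros eps He. destruct (Cf eps He) as [N HN]. exists N. intros n Hn.
      apply (near_ext (cj (H n) (Hi n) f)); [apply HN; exact Hn|].
      intros y Hy. unfold cj. rewrite E; [reflexivity|]. apply HI; auto.
Qed.

Fixpoint Lc (SS : nat -> list (R -> R)) (n : nat) : list (R -> R) :=
  match n with 0%nat => SS 0%nat | S n' => SS n ++ Lc SS n' end.

Lemma Lc_in SS m n s : In s (SS m) -> (m <= n)%nat -> In s (Lc SS n).
Proof.
  intros Hs Hmn. induction n as [|n IH].
  - assert (m = 0%nat) by lia. subst. exact Hs.
  - simpl. apply in_or_app. destruct (Nat.eq_dec m (S n)) as [->|Hne].
    + left; exact Hs.
    + right; apply IH; lia.
Qed.

Theorem theoremt (G : nat -> (R -> R) -> Prop) :
  (forall n, is_subgroup (G n)) ->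
  (forall n f, G n f -> G (S n) f) ->
  (forall n, fin_gen (G n)) ->
  (forall n, C1_close_id (G n)) ->
  C1_close_id (fun f => exists n, G n f).
Proof.
  intros HG Hmono Hfg Hcl.
  assert (Mono : forall m n f, (m <= n)%nat -> G m f -> G n f).
  { intros m n f Hle. induction Hle; auto. }
  destruct (fchoice (fun n (p : (nat -> R -> R) * (nat -> R -> R)) =>
     (forall k, Diff1p (fst p k)) /\
     (forall k x, I01 x -> I01 (snd p k x) /\ snd p k (fst p k x) = x /\ fst p k (snd p k x) = x) /\
     forall g, G n g -> C1_conv_id (fun k x => fst p k (g (snd p k x)))))
    as [hp Hhp].
  { intros n. destruct (Hcl n) as [h [hi P]]. exists (h, hi). exact P. }
  destruct (fchoice (fun n (S0 : list (R -> R)) => (forall s, In s S0 -> G n s) /\ (forall g, G n g -> gen S0 g)))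
    as [SS HSS].
  { intros n. exact (Hfg n). }
  assert (LcG : forall n s, In s (Lc SS n) -> G n s).
  { induction n as [|n IH]; intros s Hs.
    - apply (proj1 (HSS 0%nat)); exact Hs.
    - simpl in Hs. apply in_app_or in Hs as [Hs|Hs].
      + apply (proj1 (HSS (S n))); exact Hs.
      + apply Hmono, IH, Hs. }
  destruct (fchoice (fun n k => forall g, In g (Lc SS n) ->
      Near (cj (fst (hp n) k) (snd (hp n) k) g) (/ (INR n + 1)))) as [kk Hkk].
  { intros n. destruct (Hhp n) as [_ [_ Hc]].
    assert (Hpos : / (INR n + 1) > 0).
    { apply Rinv_0_lt_compat. pose proof (pos_INR n). lra. }
    destruct (list_near (fst (hp n)) (snd (hp n)) (G n) Hc (Lc SS n) (LcG n) _ Hpos) as [N HN].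
    exists N. apply HN; lia. }
  set (H := fun n => fst (hp n) (kk n)). set (Hi := fun n => snd (hp n) (kk n)).
  assert (HD : forall n, Diff1p (H n)) by (intros n; apply (Hhp n)).
  assert (HI : forall n, invp (H n) (Hi n)) by (intros n x Hx; apply (Hhp n); auto).
  exists H, Hi. split; [exact HD|]. split; [exact HI|].
  intros g [m Hg].
  assert (Base : forall s, In s (SS m) -> Conv H Hi s).
  { intros s Hs eps He. destruct (archimed_cor1 eps He) as [N [HN HN0]].
    exists (Nat.max m N). intros n Hn.
    apply (near_mono _ (/ (INR n + 1))).
    - assert (INR N <= INR n) by (apply le_INR; lia).
      assert (0 < INR N) by (apply lt_0_INR; lia).
      assert (/ (INR n + 1) <= / INR N) by (apply Rinv_le_contravar; lra). lra.
    - apply Hkk. apply (Lc_in SS m); auto; lia. }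
  destruct (gen_ind (G m) (SS m) H Hi (HG m) (proj1 (HSS m)) HD HI Base g (proj2 (HSS m) g Hg))
    as [_ [_ Cv]].
  destruct (fchoice (fun n du => C1_deriv01 (cj (H n) (Hi n) g) du)) as [du Hdu].
  { intros n. destruct (HG m) as [Gd _].
    apply (proj1 (conj_C1 (H n) (Hi n) g g (HD n) (HI n) (Gd g Hg) (fun y _ => eq_refl))). }
  exists du. split; [exact Hdu|].
  intros eps He. destruct (Cv eps He) as [N HN]. exists N. intros n Hn x Hx.
  apply (HN n Hn (du n) (Hdu n) x Hx).
Qed.
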